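(* Let $G$ be a connected graph with $n\ge 3$ vertices and $e(G)=n+k$ edges, where $1\le k\le 10$. Let $v$ be a vertex of $G$ with $d(v)=1$. If $R(G-v)>\sqrt{n-2}+\frac{2(k+1)}{(n-1)\sqrt{n-2}}$, then $R(G)>\sqrt{n-1}+\frac{2(k+1)}{n\sqrt{n-1}}$.
   Context: All graphs are finite and simple; $e(G)$ is the number of edges and $G-v$ is the graph obtained by deleting the vertex $v$ and its incident edges. For a vertex $u$, $d(u)$ is its degree (in the graph under consideration). The Randić index is $R(G)=\sum_{\{u,v\}\in E(G)} \frac{1}{\sqrt{d(u)d(v)}}$. *)

(* Defs.v *)
(* A simple graph is a symmetric irreflexive relation e on a finType T. *)
From HB Require Import structures.
From mathcomp Require Import all_boot all_order all_algebra.
Set Implicit Arguments. Unset Strict Implicit. Unset Printing Implicit Defensive.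
Import Order.TTheory GRing.Theory Num.Theory.

Definition deg_in (T : finType) (e : rel T) (S : {set T}) (u : T) : nat :=
  #|[set w in S | e u w]|.

Definition edges_in (T : finType) (e : rel T) (S : {set T}) : {set {set T}} :=
  [set E : {set T} | [exists u, exists w,
     [&& u \in S, w \in S, e u w & E == [set u; w]]]].

Definition randic_in (R : rcfType) (T : finType) (e : rel T) (S : {set T}) : R :=
  \sum_(E in edges_in e S) (Num.sqrt ((\prod_(x in E) deg_in e S x)%:R))^-1.

(* Main.v *)
Require Import Defs.
From HB Require Import structures.
From mathcomp Require Import all_boot all_order all_algebra.
From mathcomp Require Import ring lra zify.
Import Order.TTheory GRing.Theory Num.Theory.
Local Open Scope ring_scope.

Section Comb.
Variables (T : finType) (e : rel T) (u v : T).
Hypotheses (esym : symmetric e) (eirr : irreflexive e) (Hev : forall w, e v w = (w == u)).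

Lemma uv_neq : u != v.
Proof. apply/eqP=> h; have := Hev u; rewrite {1}h eirr eqxx. done. Qed.

Lemma dGS x : x != v -> deg_in e setT x = ((x == u) + deg_in e [set~ v] x)%N.
Proof.
move=> xv; rewrite /deg_in (cardsD1 v) !inE esym Hev; congr (_ + _)%N.
apply: eq_card => w; rewrite !inE; by case: (w == v).
Qed.

Lemma edgesE E : (E \in edges_in e setT) = (E == [set u; v]) || (E \in edges_in e [set~ v]).
Proof.
rewrite /edges_in !inE; apply/idP/idP.
- case/existsP=> a /existsP [b] /and4P [_ _ eab /eqP ->].
  have [av|av] := eqVneq a v.
    move: eab; rewrite av Hev => /eqP ->; by rewrite setUC eqxx.
  have [bv|bv] := eqVneq b v.
    move: eab; rewrite bv esym Hev => /eqP ->; by rewrite eqxx.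
  apply/orP; right; apply/existsP; exists a; apply/existsP; exists b.
  by rewrite !inE av bv eab eqxx.
- case/orP => [/eqP ->|].
    apply/existsP; exists u; apply/existsP; exists v.
    by rewrite !inE esym Hev !eqxx.
  case/existsP=> a /existsP [b] /and4P [_ _ eab /eqP ->].
  by apply/existsP; exists a; apply/existsP; exists b; rewrite !inE eab eqxx.
Qed.

Lemma uv_notin : [set u; v] \notin edges_in e [set~ v].
Proof.
rewrite /edges_in inE; apply/negP; case/existsP=> a /existsP [b] /and4P [ha hb _ /eqP E].
have : v \in [set u; v] by rewrite !inE eqxx orbT.
rewrite E !inE => /orP [] /eqP h; [move: ha|move: hb]; by rewrite !inE h eqxx.
Qed.

Lemma edge_u E : E \in edges_in e [set~ v] -> u \in E ->
  exists2 w, w \in [set w in [set~ v] | e u w] & E = [set u; w].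
Proof.
rewrite /edges_in inE; case/existsP=> a /existsP [b] /and4P [ha hb eab /eqP ->].
rewrite !inE => /orP [] /eqP h; subst u.
  by exists b => //; rewrite !inE; rewrite !inE in hb; rewrite hb eab.
exists a; last by rewrite setUC.
by rewrite !inE; rewrite !inE in ha; rewrite ha esym eab.
Qed.

Lemma edge_sub (S : {set T}) E x : E \in edges_in e S -> x \in E -> x \in S.
Proof.
rewrite /edges_in inE; case/existsP=> a /existsP [b] /and4P [ha hb eab /eqP ->].
by rewrite !inE => /orP [] /eqP ->.
Qed.

End Comb.
Section Real.
Variable R : rcfType.

Lemma sq_sqrt (x : R) : 0 <= x -> Num.sqrt x * Num.sqrt x = x.
Proof. by move=> hx; rewrite -expr2 sqr_sqrtr. Qed.

Lemma div_sqrt (x : R) : 0 <= x -> x / Num.sqrt x = Num.sqrt x.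
Proof.
move=> hx; have [->|nz] := eqVneq x 0; first by rewrite sqrtr0 mul0r.
have sp : 0 < Num.sqrt x by rewrite sqrtr_gt0 lt_def nz hx.
rewrite -{1}(sq_sqrt x hx) -mulrA divff ?mulr1 //; exact: lt0r_neq0.
Qed.

Lemma sqrt_diff_mono (a b : R) : 0 <= a -> a <= b ->
  Num.sqrt (b + 1) - Num.sqrt b <= Num.sqrt (a + 1) - Num.sqrt a.
Proof.
move=> ha hab.
have hb : 0 <= b by lra.
have e1 := sq_sqrt a ha. have e2 := sq_sqrt b hb.
have e3 : Num.sqrt (a+1) * Num.sqrt (a+1) = a + 1 by apply: sq_sqrt; lra.
have e4 : Num.sqrt (b+1) * Num.sqrt (b+1) = b + 1 by apply: sq_sqrt; lra.
have s1 := sqrtr_ge0 a. have s2 := sqrtr_ge0 b.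
have s3 : 0 < Num.sqrt (a+1) by rewrite sqrtr_gt0; lra.
have s4 : 0 < Num.sqrt (b+1) by rewrite sqrtr_gt0; lra.
have m1 : Num.sqrt a <= Num.sqrt b by rewrite ler_sqrt.
have m2 : Num.sqrt (a+1) <= Num.sqrt (b+1) by rewrite ler_sqrt; lra.
set p := Num.sqrt (a+1) + Num.sqrt a.
set q := Num.sqrt (b+1) + Num.sqrt b.
have hp : (Num.sqrt (a+1) - Num.sqrt a) * p = 1.
  rewrite /p; have -> : (Num.sqrt (a + 1) - Num.sqrt a) * (Num.sqrt (a + 1) + Num.sqrt a)
     = Num.sqrt (a+1) * Num.sqrt (a+1) - Num.sqrt a * Num.sqrt a by ring.
  rewrite e1 e3; ring.
have hq : (Num.sqrt (b+1) - Num.sqrt b) * q = 1.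
  rewrite /q; have -> : (Num.sqrt (b + 1) - Num.sqrt b) * (Num.sqrt (b + 1) + Num.sqrt b)
     = Num.sqrt (b+1) * Num.sqrt (b+1) - Num.sqrt b * Num.sqrt b by ring.
  rewrite e2 e4; ring.
have pq : 0 < p <= q by apply/andP; split; rewrite /p /q; lra.
move: pq => /andP [pp pq].
set x := Num.sqrt (a+1) - Num.sqrt a in hp *.
set y := Num.sqrt (b+1) - Num.sqrt b in hq *.
have xp : 0 <= x by nra.
nra.
Qed.

Lemma edge_term (A B : R) : 1 <= A -> 1 <= B ->
  (Num.sqrt (A * B))^-1 + ((Num.sqrt (A + 1))^-1 - (Num.sqrt A)^-1)
    <= (Num.sqrt ((A + 1) * B))^-1.
Proof.
move=> hA hB.
rewrite !sqrtrM; try lra.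
rewrite !invfM.
have sA : 1 <= Num.sqrt A by rewrite -sqrtr1 ler_sqrt //; lra.
have sA1 : Num.sqrt A <= Num.sqrt (A+1) by rewrite ler_sqrt; lra.
have sB : 1 <= Num.sqrt B by rewrite -sqrtr1 ler_sqrt //; lra.
have xy : (Num.sqrt (A+1))^-1 <= (Num.sqrt A)^-1.
  by rewrite lef_pV2 // posrE; lra.
have z1 : (Num.sqrt B)^-1 <= 1 by rewrite invf_le1; lra.
have z0 : 0 <= (Num.sqrt B)^-1 by rewrite invr_ge0; lra.
have x0 : 0 <= (Num.sqrt (A+1))^-1 by rewrite invr_ge0; lra.
nra.
Qed.

End Real.

Lemma final_ineq (R : rcfType) (A N K RS RG : R) : 3 <= N -> 0 <= A -> A + 2 <= N -> 0 <= K ->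
  RS > Num.sqrt (N - 2) + K / ((N - 1) * Num.sqrt (N - 2)) ->
  RG >= RS + (Num.sqrt (A + 1) - Num.sqrt A) ->
  RG > Num.sqrt (N - 1) + K / (N * Num.sqrt (N - 1)).
Proof.
move=> hN hA hAN hK hS hG.
have m := @sqrt_diff_mono R A (N - 2) hA ltac:(lra).
have e1 : N - 2 + 1 = N - 1 by ring.
rewrite e1 in m.
have s2 : 0 < Num.sqrt (N - 2) by rewrite sqrtr_gt0; lra.
have s21 : Num.sqrt (N - 2) <= Num.sqrt (N - 1) by rewrite ler_sqrt; lra.
have X0 : 0 < (N - 1) * Num.sqrt (N - 2) by apply: mulr_gt0 => //; lra.
have XY : (N - 1) * Num.sqrt (N - 2) <= N * Num.sqrt (N - 1).
  apply: ler_pM; lra.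
have Y0 : 0 < N * Num.sqrt (N - 1) by lra.
have iv : (N * Num.sqrt (N - 1))^-1 <= ((N - 1) * Num.sqrt (N - 2))^-1.
  by rewrite lef_pV2 // posrE.
have := ler_wpM2l hK iv.
lra.
Qed.

Theorem lemma2p10 (R : rcfType) (T : finType) (e : rel T) (n k : nat) (v : T) :
  symmetric e -> irreflexive e ->
  (forall x y : T, connect e x y) ->
  #|T| = n -> (3 <= n)%N ->
  #|edges_in e setT| = (n + k)%N -> (1 <= k <= 10)%N ->
  deg_in e setT v = 1%N ->
  randic_in R e [set~ v] >
    Num.sqrt (n%:R - 2) + 2 * (k%:R + 1) / ((n%:R - 1) * Num.sqrt (n%:R - 2)) ->
  randic_in R e setT >
    Num.sqrt (n%:R - 1) + 2 * (k%:R + 1) / (n%:R * Num.sqrt (n%:R - 1)).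
Proof.
move=> esym eirr _ hT hn _ _ hv hR.
have [u Hu] : exists u, [set w in setT | e v w] = [set u].
  by apply/cards1P; move: hv; rewrite /deg_in => ->.
have Hev : forall w, e v w = (w == u).
  by move=> w; rewrite -in_set1 -Hu !inE.
have uv : u != v := @uv_neq _ _ _ _ eirr Hev.
set S := [set~ v].
set a := deg_in e S u.
have dGu : deg_in e setT u = a.+1 by rewrite (@dGS _ _ _ _ esym Hev u uv) eqxx.
have dGw : forall w, w \in S -> w != u -> deg_in e setT w = deg_in e S w.
  move=> w; rewrite !inE => wv wu; by rewrite (@dGS _ _ _ _ esym Hev w wv) (negbTE wu).
set f := fun (D : T -> nat) (E : {set T}) =>
  (Num.sqrt ((\prod_(x in E) D x)%:R))^-1 : R.
have prod2 : forall (D : T -> nat) w, w != u ->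
    (\prod_(x in [set u; w]) D x = D u * D w)%N.
  move=> D w wu; rewrite big_setU1 ?big_set1 // inE eq_sym; exact: wu.
pose c : R := (Num.sqrt (a%:R + 1))^-1 - (Num.sqrt a%:R)^-1.
have stepA : randic_in R e setT =
    f (deg_in e setT) [set u; v] + \sum_(E in edges_in e S) f (deg_in e setT) E.
  rewrite /randic_in (bigD1 [set u; v]) /=; last by rewrite (@edgesE _ _ _ _ esym Hev) eqxx.
  congr (_ + _); apply: eq_bigl => E; rewrite (@edgesE _ _ _ _ esym Hev).
  case: eqP => [->|_] /=; last by rewrite andbT.
  by rewrite (negbTE (@uv_notin _ _ u v)).
have fuv : f (deg_in e setT) [set u; v] = (Num.sqrt (a%:R + 1))^-1.
  have vu : v != u by rewrite eq_sym.
  by rewrite /f (prod2 _ _ vu) dGu hv muln1 -addn1 natrD.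
have SS : randic_in R e S = \sum_(E in edges_in e S) f (deg_in e S) E by [].
rewrite (bigID (fun E : {set T} => u \in E)) /= in SS.
rewrite (bigID (fun E : {set T} => u \in E)) /= in stepA.
have nonu : \sum_(E in edges_in e S | u \notin E) f (deg_in e setT) E =
            \sum_(E in edges_in e S | u \notin E) f (deg_in e S) E.
  apply: eq_bigr => E /andP [hE huE]; rewrite /f; congr ((Num.sqrt _%:R)^-1).
  apply: eq_bigr => x hx; apply: dGw; first exact: (@edge_sub _ _ _ _ _ hE hx).
  by apply/eqP => xu; move: huE; rewrite -xu hx.
have upart : \sum_(E in edges_in e S | u \in E) (f (deg_in e S) E + c) <=
             \sum_(E in edges_in e S | u \in E) f (deg_in e setT) E.
  apply: ler_sum => E /andP [hE huE].
  have [w hw ->] := @edge_u _ _ _ _ esym Hev _ hE huE.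
  move: hw; rewrite !inE => /andP [wv euw].
  have wu : w != u by apply/eqP => h; move: euw; rewrite h eirr.
  rewrite /f !prod2 // dGu dGw ?inE //.
  have a1 : (1 <= a)%N.
    rewrite /a /deg_in; apply/card_gt0P; exists w; by rewrite !inE wv euw.
  have b1 : (1 <= deg_in e S w)%N.
    rewrite /deg_in; apply/card_gt0P; exists u; by rewrite !inE uv esym euw.
  rewrite !natrM -addn1 natrD /c.
  apply: edge_term; by rewrite ler1n.
rewrite big_split /= in upart.
set B := [set E in edges_in e S | u \in E].
have cB : \sum_(E in edges_in e S | u \in E) c = c * #|B|%:R.
  rewrite mulr_natr -sumr_const; apply: eq_bigl => E; by rewrite !inE.
have Ba : (#|B| <= a)%N.
  apply: (@leq_trans #|[set [set u; w] | w in [set w in S | e u w]]|); last exact: leq_imset_card.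
  apply: subset_leq_card; apply/subsetP => E; rewrite inE => /andP [hE huE].
  have [w hw ->] := @edge_u _ _ _ _ esym Hev _ hE huE.
  by apply/imsetP; exists w.
have cBa : c * a%:R <= c * #|B|%:R.
  case: (posnP a) => [a0|apos].
    by move: Ba; rewrite a0 leqn0 => /eqP ->.
  have c0 : c <= 0.
    have a0 : 0 < a%:R :> R by rewrite ltr0n.
    have p1 : 0 < Num.sqrt a%:R :> R by rewrite sqrtr_gt0.
    have p2 : 0 < Num.sqrt (a%:R + 1) :> R by rewrite sqrtr_gt0; lra.
    have m : Num.sqrt a%:R <= Num.sqrt (a%:R + 1) :> R by rewrite ler_sqrt; lra.
    rewrite /c subr_le0 lef_pV2 ?posrE //.
  have : #|B|%:R <= a%:R :> R by rewrite ler_nat.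
  nra.
have sa : (Num.sqrt (a%:R + 1))^-1 + c * a%:R = Num.sqrt (a%:R + 1) - Num.sqrt (a%:R).
  transitivity ((a%:R + 1) / Num.sqrt (a%:R + 1) - a%:R / Num.sqrt (a%:R) :> R).
    rewrite /c; ring.
  by rewrite !div_sqrt ?addr_ge0.
have an : (a + 2 <= n)%N.
  have : (deg_in e setT u <= #|[set~ u]|)%N.
    apply: subset_leq_card; apply/subsetP => w; rewrite !inE => euw.
    by apply/eqP => h; move: euw; rewrite h eirr.
  rewrite dGu cardsC1 hT; move: hn; clear; lia.
apply: (@final_ineq R a%:R n%:R _ (randic_in R e S)).
- by rewrite ler_nat.
- done.
- by move: an; rewrite -(ler_nat R) natrD.
- by apply: mulr_ge0 => //; apply: addr_ge0.
- exact: hR.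
rewrite stepA SS fuv nonu.
lra.
Qed.
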